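(* Let $Z$ be a fat point scheme in $\mathbb{P}^1\times\mathbb{P}^1$. Then $\alpha_Z^*\unrhd\beta_Z$.
   Context: $\mathbf{k}$ algebraically closed; a fat point scheme $Z$ in $\mathbb{P}^1\times\mathbb{P}^1$ is given by distinct points with positive multiplicities. With $\pi_1(\mathrm{Supp}\,Z)=\{R_1,\dots,R_r\}$, $\pi_2(\mathrm{Supp}\,Z)=\{Q_1,\dots,Q_t\}$ and $m_{ij}$ the multiplicity of $R_i\times Q_j$ ($0$ if absent): $l_i=\max_j m_{ij}$, $a_{i,k}=\sum_j(m_{ij}-k)_+$ ($0\le k\le l_i-1$), $\alpha_Z$ = all $a_{i,k}$ in non-increasing order; $l'_j=\max_i m_{ij}$, $b_{j,k}=\sum_i(m_{ij}-k)_+$ ($0\le k\le l'_j-1$), $\beta_Z$ = all $b_{j,k}$ in non-increasing order; $(n)_+=\max\{0,n\}$. Both are partitions of $\sum\binom{m_i+1}{2}$. The conjugate of a partition $\lambda=(\lambda_1\ge\dots\ge\lambda_n)$ is $\lambda^*=(\lambda^*_1,\dots,\lambda^*_{\lambda_1})$ with $\lambda^*_i=\#\{j:\lambda_j\ge i\}$. For partitions $\lambda,\delta$ of the same integer (the shorter padded with zeros), $\lambda\unrhd\delta$ means $\lambda_1+\dots+\lambda_i\ge\delta_1+\dots+\delta_i$ for all $i$. *)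

(* Defs.v *)
From mathcomp Require Import all_boot all_order all_algebra.
Set Implicit Arguments. Unset Strict Implicit. Unset Printing Implicit Defensive.

(* A point of P^1 over k, in normalized homogeneous coordinates:
   [Some x] = [1 : x], [None] = [0 : 1].  This is a bijection with P^1(k). *)
Definition P1 (k : closedFieldType) := option k.

Definition fat_point_scheme (k : closedFieldType) (Z : seq ((P1 k * P1 k) * nat)) : Prop :=
  uniq (map fst Z) /\ all (fun p => 0 < p.2) Z.

Section FatPoints.
Variable k : closedFieldType.
Variable Z : seq ((P1 k * P1 k) * nat).

Definition Rs : seq (P1 k) := undup [seq p.1.1 | p <- Z].
Definition Qs : seq (P1 k) := undup [seq p.1.2 | p <- Z].

Definition mult (R Q : P1 k) : nat := \sum_(p <- Z | p.1 == (R, Q)) p.2.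

Definition lrow (R : P1 k) : nat := \max_(Q <- Qs) mult R Q.
Definition lcol (Q : P1 k) : nat := \max_(R <- Rs) mult R Q.

(* a_{i,k} = sum_j (m_ij - k)_+ ; truncated nat subtraction is (.)_+ *)
Definition a_entry (R : P1 k) (c : nat) : nat := \sum_(Q <- Qs) (mult R Q - c).
Definition b_entry (Q : P1 k) (c : nat) : nat := \sum_(R <- Rs) (mult R Q - c).

Definition alpha : seq nat :=
  sort geq (flatten [seq [seq a_entry R c | c <- iota 0 (lrow R)] | R <- Rs]).
Definition beta : seq nat :=
  sort geq (flatten [seq [seq b_entry Q c | c <- iota 0 (lcol Q)] | Q <- Qs]).
End FatPoints.

Definition conj_part (l : seq nat) : seq nat :=
  [seq count (fun x => i <= x) l | i <- iota 1 (\max_(x <- l) x)].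

(* dominance order (shorter sequence padded with zeros) *)
Definition dominates (l d : seq nat) : Prop :=
  forall i, sumn (take i d) <= sumn (take i l).

(* Main.v *)
Require Import Defs.
From mathcomp Require Import all_boot all_order all_algebra.
Set Implicit Arguments. Unset Strict Implicit. Unset Printing Implicit Defensive.

Lemma sum_iota_lt (c m L : nat) :
  \sum_(d <- iota 0 L) (c + d < m) = minn L (m - c).
Proof.
elim: L => [|L IH]; first by rewrite big_nil min0n.
rewrite -addn1 iotaD big_cat big_seq1 /= IH add0n.
case: (ltnP (c + L) m) => H /=.
- have H1 : L < m - c by rewrite ltn_subRL.
  rewrite (minn_idPl (ltnW H1)) addn1; apply/esym/minn_idPl; exact: H1.
- have H1 : m - c <= L by rewrite leq_subLR.
  rewrite (minn_idPr H1) addn0; apply/esym/minn_idPr; by rewrite addn1 (leq_trans H1).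
Qed.

Lemma sum_undup_le (T : eqType) (s : seq T) (F : T -> nat) :
  \sum_(x <- undup s) F x <= \sum_(x <- s) F x.
Proof.
elim: s => [|x s IH] //=; case: (x \in s).
- by rewrite big_cons (leq_trans IH) // leq_addl.
- by rewrite !big_cons leq_add2l.
Qed.

Lemma sum_sub_le (T : eqType) (S s : seq T) (F : T -> nat) :
  uniq S -> {subset S <= s} -> \sum_(x <- S) F x <= \sum_(x <- s) F x.
Proof.
move=> uS sub.
have P : perm_eq S [seq x <- undup s | x \in S].
  apply: uniq_perm => //; first by rewrite filter_uniq // undup_uniq.
  by move=> x; rewrite mem_filter mem_undup; case Hx: (x \in S) => //=; rewrite sub.
rewrite (perm_big _ P) big_filter (leq_trans _ (sum_undup_le s F)) //.
by rewrite [X in _ <= X](bigID (fun x => x \in S)) /= leq_addr.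
Qed.

Lemma conj_sum (l : seq nat) (n : nat) :
  sumn (take n (conj_part l)) = \sum_(x <- l) minn x n.
Proof.
rewrite /conj_part -map_take take_iota sumnE big_map.
set M := \max_(x <- l) x.
have HM : forall x, x \in l -> x <= M by move=> x xl; exact: leq_bigmax_seq.
transitivity (\sum_(i <- iota 1 (minn n M)) \sum_(x <- l) (i <= x)).
  by apply: eq_bigr => i _; rewrite -sum1_count big_mkcond.
rewrite exchange_big /= big_seq [RHS]big_seq; apply: eq_bigr => x xl.
rewrite (iotaDl 1 0) big_map.
have -> : \sum_(j <- iota 0 (minn n M)) (1 + j <= x) = \sum_(j <- iota 0 (minn n M)) (0 + j < x).
  by apply: eq_bigr.
rewrite sum_iota_lt subn0.
by rewrite -minnA (minn_idPr (HM x xl)) minnC.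
Qed.

Section Main.
Variable k : closedFieldType.
Variable Z : seq ((P1 k * P1 k) * nat).

Definition rowsL : seq (P1 k * nat) :=
  flatten [seq [seq (R, c) | c <- iota 0 (lrow Z R)] | R <- Rs Z].
Definition colsL : seq (P1 k * nat) :=
  flatten [seq [seq (Q, d) | d <- iota 0 (lcol Z Q)] | Q <- Qs Z].

Lemma mult0 R Q : (R \notin Rs Z) || (Q \notin Qs Z) -> mult Z R Q = 0.
Proof.
move=> H; rewrite /mult big_seq_cond big1 // => p /andP [pZ /eqP e].
move: H; rewrite /Rs /Qs !mem_undup.
have h1 : R \in [seq p.1.1 | p <- Z] by apply/mapP; exists p => //; rewrite e.
have h2 : Q \in [seq p.1.2 | p <- Z] by apply/mapP; exists p => //; rewrite e.
by rewrite h1 h2.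
Qed.

Lemma mult_le_lcol R Q : mult Z R Q <= lcol Z Q.
Proof.
case RR: (R \in Rs Z); first by rewrite /lcol; apply: (@leq_bigmax_seq _ _ xpredT (fun R => mult Z R Q) R RR).
by rewrite mult0 // RR.
Qed.

Lemma mult_le_lrow R Q : mult Z R Q <= lrow Z R.
Proof.
case QQ: (Q \in Qs Z); first by rewrite /lrow; apply: (@leq_bigmax_seq _ _ xpredT (fun Q => mult Z R Q) Q QQ).
by rewrite mult0 // QQ orbT.
Qed.

Definition E (r s : P1 k * nat) : nat := (r.2 + s.2 < mult Z r.1 s.1).

Lemma a_sum r : a_entry Z r.1 r.2 = \sum_(s <- colsL) E r s.
Proof.
rewrite /colsL big_flatten big_map /a_entry; apply: eq_bigr => Q _.
rewrite big_map /E /= sum_iota_lt; apply/esym/minn_idPr.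
exact: leq_trans (leq_subr _ _) (mult_le_lcol _ _).
Qed.

Lemma b_sum s : b_entry Z s.1 s.2 = \sum_(r <- rowsL) E r s.
Proof.
rewrite /rowsL big_flatten big_map /b_entry; apply: eq_bigr => R _.
rewrite big_map /E /=.
rewrite (eq_bigr (fun c => (s.2 + c < mult Z R s.1) : nat)); last by move=> c _; rewrite addnC.
rewrite sum_iota_lt; apply/esym/minn_idPr.
exact: leq_trans (leq_subr _ _) (mult_le_lrow _ _).
Qed.

Lemma alphaE : alpha Z = sort geq [seq a_entry Z r.1 r.2 | r <- rowsL].
Proof.
rewrite /alpha /rowsL map_flatten -map_comp; congr (sort _ (flatten _)).
by apply: eq_map => x /=; rewrite -map_comp.
Qed.

Lemma betaE : beta Z = sort geq [seq b_entry Z s.1 s.2 | s <- colsL].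
Proof.
rewrite /beta /colsL map_flatten -map_comp; congr (sort _ (flatten _)).
by apply: eq_map => x /=; rewrite -map_comp.
Qed.

Lemma flat_uniq (qs : seq (P1 k)) (f : P1 k -> nat) :
  uniq qs -> uniq (flatten [seq [seq (Q, d) | d <- iota 0 (f Q)] | Q <- qs]).
Proof.
elim: qs => [|Q qs IH] //= /andP [nQ uq].
rewrite cat_uniq IH // andbT map_inj_uniq ?iota_uniq; last by move=> x y [].
rewrite /=; apply/hasPn => x /flattenP [l /mapP [Q' Q'q ->]] /mapP [d _ ->] /=.
apply/negP => /mapP [d' _ [e _]]; move: nQ; by rewrite -e Q'q.
Qed.

Lemma colsL_uniq : uniq colsL.
Proof. exact/flat_uniq/undup_uniq. Qed.

Lemma main n : sumn (take n (beta Z)) <= sumn (take n (conj_part (alpha Z))).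
Proof.
rewrite conj_sum alphaE (perm_big _ (permEl (perm_sort _ _))) big_map.
rewrite betaE sort_map -map_take.
set S := take n _.
have uS : uniq S by rewrite take_uniq // sort_uniq colsL_uniq.
have sS : {subset S <= colsL} by move=> x /mem_take; rewrite mem_sort.
have zS : size S <= n by rewrite size_take_min geq_minl.
rewrite sumnE big_map.
under eq_bigr do rewrite b_sum.
rewrite exchange_big /=; apply: leq_sum => r _.
rewrite leq_min; apply/andP; split.
- rewrite a_sum; exact: sum_sub_le.
- apply: leq_trans zS; rewrite -sum1_size; apply: leq_sum => s _.
  by rewrite /E; case: (_ < _).
Qed.

End Main.

Theorem theorem3p16 (k : closedFieldType) (Z : seq ((P1 k * P1 k) * nat)) :
  fat_point_scheme Z -> dominates (conj_part (alpha Z)) (beta Z).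
Proof. by move=> _ n; apply: main. Qed.
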